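(* Let $D$ be a strongly connected digraph with at least two vertices and girth $g$. Let $l=\min_{u\in V(D)} \lambda(u)$, where $\lambda(u)$ is the length of a longest directed path in $D$ starting at $u$. Then $\chi_A(D)\le \left\lceil\frac{l+1}{g-1}\right\rceil$.
   Context: Digraphs are finite and loopless; paths and cycles are directed. Girth is the length of a shortest directed cycle. $\chi_A(D)$ is the minimum number of colors in a vertex coloring of $D$ in which every color class induces an acyclic subdigraph. *)

(* Defs.v *)
From mathcomp Require Import all_boot.
Set Implicit Arguments. Unset Strict Implicit. Unset Printing Implicit Defensive.

Section Digraph.
Variables (V : finType) (e : rel V).

Definition loopless : Prop := forall x, ~~ e x x.

Definition strongly_connected : Prop := forall x y, connect e x y.

(* a directed path x = x_0 -> x_1 -> ... -> x_n with distinct vertices;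
   its length is the number of arcs n = size p *)
Definition dipath (x : V) (p : seq V) : bool := path e x p && uniq (x :: p).

(* a directed cycle through the distinct vertices x :: p, closing with the
   arc (last x p) -> x; its length is size p + 1 *)
Definition dicycle (x : V) (p : seq V) : bool :=
  [&& path e x p, e (last x p) x & uniq (x :: p)].

Definition is_girth (g : nat) : Prop :=
  (exists x p, dicycle x p /\ (size p).+1 = g) /\
  (forall x p, dicycle x p -> g <= (size p).+1).

Definition is_longest_path_from (u : V) (n : nat) : Prop :=
  (exists p, dipath u p /\ size p = n) /\
  (forall p, dipath u p -> size p <= n).

Definition is_min_longest_path (l : nat) : Prop :=
  (exists u, is_longest_path_from u l) /\
  (forall u n, is_longest_path_from u n -> l <= n).

(* a coloring c with k colors is acyclic iff every color class induces an
   acyclic subdigraph, i.e. no directed cycle is monochromatic *)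
Definition acyclic_coloring (k : nat) (c : V -> 'I_k) : Prop :=
  forall x p, dicycle x p -> ~ (forall y, y \in p -> c y = c x).

Definition chiA_le (m : nat) : Prop :=
  exists c : V -> 'I_m, acyclic_coloring c.

End Digraph.

Definition ceil_div (a b : nat) : nat := (a + b.-1) %/ b.

(* Main.v *)
Require Import Defs.
From mathcomp Require Import all_boot zify.
From Stdlib Require Import Classical ClassicalEpsilon.
Set Implicit Arguments. Unset Strict Implicit. Unset Printing Implicit Defensive.

Section G.
Variable V : finType.

Definition hr (H : {set V * V}) : rel V := fun x y => (x, y) \in H.

Definition dag (H : {set V * V}) : bool :=
  [forall x, forall y, ((x, y) \in H) ==> ~~ connect (hr H) y x].

Lemma dagP (H : {set V * V}) x y : dag H -> (x, y) \in H -> ~~ connect (hr H) y x.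
Proof. by move=> /forallP /(_ x) /forallP /(_ y) /implyP. Qed.

Lemma hr_sub (H H' : {set V * V}) : H \subset H' -> subrel (hr H) (hr H').
Proof. by move=> /subsetP sHH' x y; apply: sHH'. Qed.

Lemma connect_mono (H H' : {set V * V}) x y : H \subset H' -> connect (hr H) x y -> connect (hr H') x y.
Proof.
move=> s; apply: connect_sub => a b hab; apply: connect1; exact: hr_sub hab.
Qed.

Lemma connect_add (H : {set V * V}) a b x y : connect (hr ((a, b) |: H)) x y ->
  connect (hr H) x y \/ (connect (hr H) x a /\ connect (hr H) b y).
Proof.
move=> /connectP [p]; elim: p x => [|z p IH] x /=.
  by move=> _ ->; left; exact: connect0.
move=> /andP [hxz hp] hy; have [h|[h1 h2]] := IH z hp hy.
  move: hxz; rewrite /hr in_setU1 => /orP [/eqP [? ?]|hxz]; first subst.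
    by right; split=> //; exact: connect0.
  by left; apply: connect_trans h; exact: connect1.
move: hxz; rewrite /hr in_setU1 => /orP [/eqP [? ?]|hxz]; first subst.
  by right; split=> //; exact: connect0.
by right; split=> //; apply: connect_trans h1; exact: connect1.
Qed.

Lemma dag_uniq (H : {set V * V}) x p : dag H -> path (hr H) x p -> uniq (x :: p).
Proof.
move=> dH; elim: p x => [|z p IH] x //= /andP [hxz hp].
have := IH z hp; move=> /= ->; rewrite andbT.
apply/negP => xin.
have := dagP dH hxz; rewrite (path_connect hp xin) //.
Qed.

End G.
Set Implicit Arguments. Unset Strict Implicit. Unset Printing Implicit Defensive.

Section M.
Variables (V : finType) (e : rel V) (u : V).
Hypothesis sc : strongly_connected e.

Definition good (H : {set V * V}) : bool :=
  [&& H \subset [set p : V * V | e p.1 p.2], dag H &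
      [forall x, forall y, ((x, y) \in H) ==> connect (hr H) u x]].

Lemma good0 : good set0.
Proof.
apply/and3P; split; first exact: sub0set.
  by apply/forallP => x; apply/forallP => y; rewrite in_set0.
by apply/forallP => x; apply/forallP => y; rewrite in_set0.
Qed.

Definition Hm := [arg max_(H > set0 | good H) #|H|].

Lemma Hm_spec : good Hm /\ forall H, good H -> #|H| <= #|Hm|.
Proof. by rewrite /Hm; case: arg_maxnP; first exact: good0. Qed.

Lemma good_e H x y : good H -> (x, y) \in H -> e x y.
Proof. by case/and3P => /subsetP s _ _ /s; rewrite inE. Qed.

Lemma good_src H x y : good H -> (x, y) \in H -> connect (hr H) u x.
Proof. by case/and3P => _ _ /forallP /(_ x) /forallP /(_ y) /implyP. Qed.

Lemma good_dag H : good H -> dag H.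
Proof. by case/and3P. Qed.

Lemma no_out H b z : good H -> ~~ connect (hr H) u b -> connect (hr H) b z -> z = b.
Proof.
move=> gH nb /connectP [[|z1 p] /=]; first by move=> _ ->.
by move=> /andP [h _]; have := good_src gH h; rewrite (negbTE nb).
Qed.

Lemma exit_arc H x p : path e x p -> connect (hr H) u x ->
  ~~ connect (hr H) u (last x p) ->
  exists a b, [/\ e a b, connect (hr H) u a & ~~ connect (hr H) u b].
Proof.
elim: p x => [|z p IH] x /=; first by move=> _ ->.
move=> /andP [hxz hp] hx hl.
case hz: (connect (hr H) u z); first exact: IH hz hl.
by exists x, z; rewrite hz.
Qed.

Lemma Hm_reach v : connect (hr Hm) u v.
Proof.
have [gH mH] := Hm_spec.
apply/negPn/negP => nv.
have /connectP [p hp hl] := sc u v.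
have [a [b [eab ha nb]]] : exists a b, [/\ e a b, connect (hr Hm) u a & ~~ connect (hr Hm) u b].
  by apply: (exit_arc hp (connect0 _ _)); rewrite -hl.
set H' := (a, b) |: Hm.
have nin : (a, b) \notin Hm.
  apply/negP => hin; move: nb; rewrite (connect_trans ha (connect1 _)) //.
have sub : Hm \subset H' by apply/subsetP => q; rewrite /H' in_setU1 orbC => ->.
have gH' : good H'.
  apply/and3P; split.
  - apply/subsetP => [[x y]]; rewrite /H' in_setU1 inE /= => /orP [/eqP [-> ->] //|].
    exact: good_e gH.
  - apply/forallP => x; apply/forallP => y; apply/implyP => hxy; apply/negP.
    move=> /connect_add [h|[h1 h2]].
    + move: hxy; rewrite /H' in_setU1 => /orP [/eqP [? ?]|hxy]; first subst x y.
        have ba := no_out gH nb h; by move: ha; rewrite ba (negbTE nb).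
      by have := dagP (good_dag gH) hxy; rewrite h.
    + have xb := no_out gH nb h2; subst x.
      move: hxy; rewrite /H' in_setU1 => /orP [/eqP [? ?]|hxy].
        by subst; move: nb; rewrite ha.
      by move: nb; rewrite (good_src gH hxy).
  - apply/forallP => x; apply/forallP => y; apply/implyP.
    rewrite /H' in_setU1 => /orP [/eqP [? ?]|hxy].
      by subst; exact: connect_mono sub ha.
    exact: connect_mono sub (good_src gH hxy).
have := mH _ gH'; rewrite /H' cardsU1 nin add1n ltnn //.
Qed.

Lemma Hm_back v w : e v w -> (v, w) \notin Hm -> connect (hr Hm) w v.
Proof.
have [gH mH] := Hm_spec => evw nin.
set H' := (v, w) |: Hm.
have sub : Hm \subset H' by apply/subsetP => q; rewrite /H' in_setU1 orbC => ->.
have ndag : ~~ dag H'.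
  apply/negP => dH'.
  have gH' : good H'.
    apply/and3P; split=> //.
    - apply/subsetP => [[x y]]; rewrite /H' in_setU1 inE /= => /orP [/eqP [-> ->] //|].
      exact: good_e gH.
    - apply/forallP => x; apply/forallP => y; apply/implyP => _.
      exact: connect_mono sub (Hm_reach x).
  have := mH _ gH'; rewrite /H' cardsU1 nin add1n ltnn //.
move: ndag => /forallPn [x] /forallPn [y]; rewrite negb_imply negbK.
case/andP => hxy /connect_add [h|[h1 h2]].
  move: hxy; rewrite /H' in_setU1 => /orP [/eqP [? ?]|hxy]; first by subst.
  by have := dagP (good_dag gH) hxy; rewrite h.
move: hxy; rewrite /H' in_setU1 => /orP [/eqP [? ?]|hxy]; first by subst.
apply: connect_trans h2 _; apply: connect_trans h1; exact: connect1.
Qed.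

End M.
Set Implicit Arguments. Unset Strict Implicit. Unset Printing Implicit Defensive.

Lemma ex_max (P : nat -> Prop) B n0 : P n0 -> (forall n, P n -> n <= B) ->
  exists m, P m /\ forall n, P n -> n <= m.
Proof.
move=> p0 hB; move: {2}(B - n0) (leqnn (B - n0)) => d.
elim: d n0 p0 => [|d IH] n0 p0 hd.
  by exists n0; split=> // n /hB; lia.
case: (classic (exists n, P n /\ n0 < n)) => [[n [pn lt]]|nex].
  by apply: (IH n pn); have := hB _ pn; lia.
exists n0; split=> // n pn; rewrite leqNgt; apply/negP => lt; apply: nex.
by exists n.
Qed.

Section F.
Variables (V : finType) (e : rel V) (u : V) (g l : nat).
Hypothesis sc : strongly_connected e.
Hypothesis ll : loopless e.
Hypothesis hg : is_girth e g.
Hypothesis hl : is_longest_path_from e u l.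

Let H := Hm e u.
Definition Wk v n := exists p, path (hr H) u p /\ last u p = v /\ size p = n.

Lemma Wk_bound v n : Wk v n -> n <= l.
Proof.
case=> p [hp [_ <-]]; case: hl => _; apply; apply/andP; split.
  apply: sub_path hp => x y; exact: good_e (proj1 (Hm_spec e u)).
exact: dag_uniq (good_dag (proj1 (Hm_spec e u))) hp.
Qed.

Lemma fmax v : exists m, Wk v m /\ forall n, Wk v n -> n <= m.
Proof.
have /connectP [p hp hv] := Hm_reach u sc v.
apply: (@ex_max _ l (size p)); first by exists p.
exact: Wk_bound.
Qed.

Definition f v := proj1_sig (constructive_indefinite_description _ (fmax v)).

Lemma f_spec v : Wk v (f v) /\ forall n, Wk v n -> n <= f v.
Proof. rewrite /f; case: constructive_indefinite_description => //. Qed.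

Lemma f_le v : f v <= l.
Proof. exact: Wk_bound (proj1 (f_spec v)). Qed.

Lemma f_H v w : (v, w) \in H -> f v < f w.
Proof.
move=> hvw; have [[p [hp [hv hs]]] _] := f_spec v.
apply: (proj2 (f_spec w)); exists (rcons p w); split.
  by rewrite rcons_path hp hv.
by rewrite last_rcons size_rcons hs.
Qed.

Lemma f_back v w : e v w -> (v, w) \notin H -> f w + (g - 1) <= f v.
Proof.
move=> evw nin; have /connectP [q0 hq0 hv0] := @Hm_back V e u sc v w evw nin.
case: (shortenP hq0) hv0 => q hq uq _ hv.
have gq : g <= (size q).+1.
  apply: (proj2 hg w q); rewrite /dicycle -hv evw uq !andbT.
  apply: sub_path hq => x y; exact: good_e (proj1 (Hm_spec e u)).
have [[p [hp [hw hs]]] _] := f_spec w.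
have : size (p ++ q) <= f v.
  apply: (proj2 (f_spec v)); exists (p ++ q); split=> //.
    by rewrite cat_path hp hw hq.
  by rewrite last_cat hw.
rewrite size_cat hs => h; apply: leq_trans h; by rewrite leq_add2l leq_subLR add1n.
Qed.

End F.

Set Implicit Arguments. Unset Strict Implicit. Unset Printing Implicit Defensive.

Lemma ceil_lt n l k : 0 < k -> n <= l -> n %/ k < ceil_div (l + 1) k.
Proof.
move=> k0 nl; rewrite /ceil_div -addnA add1n prednK // divnDr // divnn k0 addn1 ltnS.
exact: leq_div2r.
Qed.

Lemma div_step a b k : 0 < k -> a + k <= b -> a %/ k < b %/ k.
Proof.
move=> k0 h; have := leq_div2r k h; rewrite divnDr // divnn k0 addn1 //.
Qed.

Theorem mainTheorem16 (V : finType) (e : rel V) (g l : nat) :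
  loopless e ->
  strongly_connected e ->
  1 < #|V| ->
  is_girth e g ->
  is_min_longest_path e l ->
  chiA_le e (ceil_div (l + 1) (g - 1)).
Proof.
move=> ll sc _ hg [[u hu] _].
have k0 : 0 < g - 1.
  case: hg => [[x [p [hc <-]]] _]; case: p hc => [|z p] //.
  by rewrite /dicycle /= (negbTE (ll x)).
pose F := f sc hu.
exists (fun v => Ordinal (ceil_lt k0 (f_le sc hu v))).
move=> x p hc hm.
have arc v w : e v w -> F v %/ (g - 1) = F w %/ (g - 1) -> F v < F w.
  move=> evw eq; case hin: ((v, w) \in Hm e u); first exact: f_H hin.
  have := div_step k0 (f_back sc hg hu evw (negbT hin)).
  by rewrite eq ltnn.
have cl y : y \in x :: p -> F y %/ (g - 1) = F x %/ (g - 1).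
  rewrite inE => /orP [/eqP -> //|/hm] /(congr1 val) //.
case/and3P: hc => hp hlast _.
have mono : forall z q, path e z q -> {subset z :: q <= x :: p} -> F z <= F (last z q).
  move=> z q; elim: q z => [|z2 q IH] z //= /andP [hz hq] sub.
  apply: leq_trans (ltnW (arc _ _ hz _)) (IH _ hq _).
    by rewrite (cl _ (sub _ (mem_head _ _))) (cl _ (sub _ _)) // inE mem_head orbT.
  by move=> y hy; apply: sub; rewrite inE hy orbT.
have := arc _ _ hlast; rewrite (cl _ (mem_last _ _)).
move=> /(_ erefl); rewrite ltnNge (mono _ _ hp) //.
Qed.
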